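(* Let $(W,S)$ be a right-angled Coxeter system, $q>0$ and $p=(q-1)/\sqrt q$. For every $\mathbf{w}\in W$, $$T_{\mathbf{w}}=\sum_{(\mathbf{w}',\Gamma_0,\mathbf{w}'')\in A_{\mathbf{w}}} p^{\#V\Gamma_0}\, T^{(1)}_{\mathbf{w}'}\,P_{V\Gamma_0}\,T^{(1)}_{\mathbf{w}''}$$ as operators on $L^2(\mathcal{M}_q)$.
   Context: $(W,S)$: $S$ finite, $m(s,s)=1$, $m(s,t)=m(t,s)\in\{2,\infty\}$ for $s\neq t$, $W=\langle S\mid (st)^{m(s,t)}=1\rangle$; $|\mathbf{w}|$ word length. The Hecke algebra has linear basis $\{T_{\mathbf{w}}\}_{\mathbf{w}\in W}$, $T_e=1$, $T_sT_{\mathbf{w}}=T_{s\mathbf{w}}$ if $|s\mathbf{w}|>|\mathbf{w}|$ and $T_{s\mathbf{w}}+pT_{\mathbf{w}}$ otherwise, $T_{\mathbf{w}}^*=T_{\mathbf{w}^{-1}}$; $L^2(\mathcal{M}_q)$ is the GNS space of the trace $\tau(T_{\mathbf{w}})=\delta_{\mathbf{w},e}$ with cyclic vector $\Omega=T_e$ (so $\{T_{\mathbf{w}}\Omega\}$ is an orthonormal basis), and $T_{\mathbf{w}}$ acts by left multiplication. For $\mathbf{v}\in W$, $T^{(1)}_{\mathbf{v}}$ is the unitary on $L^2(\mathcal{M}_q)$ with $T^{(1)}_{\mathbf{v}}(T_{\mathbf{w}}\Omega)=T_{\mathbf{v}\mathbf{w}}\Omega$. For $\mathbf{u}\in W$,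 $P_{\mathbf{u}}$ is the orthogonal projection onto the closed span of $\{T_{\mathbf{v}}\Omega: |\mathbf{u}^{-1}\mathbf{v}|=|\mathbf{v}|-|\mathbf{u}|\}$. A clique is a (possibly empty) set $V\Gamma_0\subseteq S$ of pairwise distinct generators with $m(s,t)=2$ for all distinct $s,t\in V\Gamma_0$; $\#V\Gamma_0=|V\Gamma_0|$ is its number of elements, $V\Gamma_0$ also denotes the product in $W$ of its elements, and $P_{V\Gamma_0}$ is $P_{\mathbf{u}}$ for this product $\mathbf{u}$. $A_{\mathbf{w}}$ is the set of triples $(\mathbf{w}',\Gamma_0,\mathbf{w}'')$ with $\mathbf{w}',\mathbf{w}''\in W$ and $\Gamma_0$ a clique such that (1) $\mathbf{w}=\mathbf{w}'\,V\Gamma_0\,\mathbf{w}''$, (2) $|\mathbf{w}|=|\mathbf{w}'|+|V\Gamma_0|+|\mathbf{w}''|$, (3) every $s\in S$ that commutes with all elements of $V\Gamma_0$ satisfies $|\mathbf{w}'s|>|\mathbf{w}'|$. *)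

(* Defs.v *)
From HB Require Import structures.
From Stdlib Require Import Relation_Operators.
From mathcomp Require Import all_boot all_order all_algebra generic_quotient.
From mathcomp Require Import boolp reals.

Set Implicit Arguments.
Unset Strict Implicit.
Unset Printing Implicit Defensive.

Import Order.TTheory GRing.Theory Num.Theory.
Local Open Scope quotient_scope.

(** * Right-angled Coxeter group W = < S | s^2 = 1, (st)^2 = 1 if comm s t >
    [comm s t] means m(s,t) = 2 (for s <> t); otherwise m(s,t) = oo. *)
Section Coxeter.
Variables (S : finType) (comm : rel S).

Inductive wstep : seq S -> seq S -> Prop :=
| wstep_cancel (u v : seq S) (s : S) : wstep (u ++ s :: s :: v) (u ++ v)
| wstep_comm (u v : seq S) (s t : S) :
    comm s t -> wstep (u ++ s :: t :: v) (u ++ t :: s :: v).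

Definition weq (u v : seq S) : Prop := clos_refl_sym_trans _ wstep u v.
Definition weqb (u v : seq S) : bool := `[< weq u v >].

Lemma weqb_refl : reflexive weqb.
Proof. by move=> u; apply/asboolP; apply: rst_refl. Qed.
Lemma weqb_sym : symmetric weqb.
Proof.
by move=> u v; apply/asboolP/asboolP => h; apply: rst_sym.
Qed.
Lemma weqb_trans : transitive weqb.
Proof.
by move=> v u w /asboolP h1 /asboolP h2; apply/asboolP; apply: rst_trans h2.
Qed.

Definition weq_rel := EquivRel weqb weqb_refl weqb_sym weqb_trans.

Definition W := {eq_quot weq_rel}.
HB.instance Definition _ := Choice.on W.
HB.instance Definition _ := Quotient.on W.

Definition wpi (u : seq S) : W := \pi_W u.
Definition wmul (x y : W) : W := wpi (repr x ++ repr y).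
Definition winv (x : W) : W := wpi (rev (repr x)).
Definition wgen (s : S) : W := wpi [:: s].

Lemma wlen_ex (x : W) : exists n, [exists t : n.-tuple S, wpi t == x].
Proof.
exists (size (repr x)); apply/existsP; exists (in_tuple (repr x)).
by rewrite /wpi reprK.
Qed.
Definition wlen (x : W) : nat := ex_minn (wlen_ex x).

Lemma redword_ex (x : W) :
  exists u : seq S, (wpi u == x) && (size u == wlen x).
Proof.
rewrite /wlen; case: ex_minnP => n /existsP [t /eqP <-] _.
by exists (tval t); rewrite eqxx size_tuple eqxx.
Qed.
Definition redword (x : W) : seq S := xchoose (redword_ex x).

Definition clique (G : {set S}) : Prop :=
  forall s t, s \in G -> t \in G -> s != t -> comm s t.
Definition VG (G : {set S}) : W := wpi (enum G).

Definition wball (n : nat) : seq W :=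
  undup (flatten [seq [seq wpi (tval t) | t <- enum {: k.-tuple S}]
                 | k <- iota 0 n.+1]).

Definition inA (w w1 : W) (G : {set S}) (w2 : W) : Prop :=
  [/\ clique G,
      w = wmul w1 (wmul (VG G) w2),
      wlen w = (wlen w1 + wlen (VG G) + wlen w2)%N &
      forall s : S, (forall t, t \in G -> wmul (wgen s) (wgen t) = wmul (wgen t) (wgen s)) ->
        (wlen w1 < wlen (wmul w1 (wgen s)))%N].

(** Operators on vectors.  A vector sum_x f(x) T_x Omega of L^2(M_q) is
    encoded by its coefficient function f : W -> R. *)
Section Ops.
Variables (R : realType).

Local Open Scope ring_scope.
Definition vec := W -> R.

(* left multiplication by T_s:  T_s T_x = T_{sx} if |sx| > |x|,
   T_{sx} + p T_x otherwise *)
Definition Ts (p : R) (s : S) (f : vec) : vec :=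
  fun y => f (wmul (wgen s) y) +
           (if (wlen (wmul (wgen s) y) < wlen y)%N then p * f y else 0).

Definition Tw (p : R) (w : W) (f : vec) : vec :=
  foldr (fun s g => Ts p s \o g) id (redword w) f.

(* T^(1)_v : T_x Omega |-> T_{vx} Omega *)
Definition T1 (v : W) (f : vec) : vec := fun y => f (wmul (winv v) y).

Definition Pu (u : W) (f : vec) : vec :=
  fun v => if (wlen (wmul (winv u) v) + wlen u == wlen v)%N then f v else 0.

End Ops.
End Coxeter.

(* Main.v *)
Require Import Defs.
From HB Require Import structures.
From Stdlib Require Import Relation_Operators.
From mathcomp Require Import all_boot all_order all_algebra generic_quotient.
From mathcomp Require Import boolp reals zify.
Import Order.TTheory GRing.Theory Num.Theory.

Set Implicit Arguments.
Unset Strict Implicit.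
Unset Printing Implicit Defensive.

Section Words.
Variables (S : finType) (comm : rel S) (comm_sym : symmetric comm).

Local Notation wstep := (@wstep S comm).
Local Notation weq := (@weq S comm).

Lemma wstep_catl w u v : wstep u v -> wstep (w ++ u) (w ++ v).
Proof. by case=> [x y s|x y s t h]; rewrite !catA; constructor. Qed.

Lemma wstep_catr w u v : wstep u v -> wstep (u ++ w) (v ++ w).
Proof. by case=> [x y s|x y s t h]; rewrite -!catA /=; constructor. Qed.

Lemma weq_refl u : weq u u. Proof. exact: rst_refl. Qed.
Lemma weq_sym u v : weq u v -> weq v u. Proof. exact: rst_sym. Qed.
Lemma weq_trans u v w : weq u v -> weq v w -> weq u w.
Proof. exact: rst_trans. Qed.

Lemma weq_catl w u v : weq u v -> weq (w ++ u) (w ++ v).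
Proof.
elim=> [x y h|x|x y _ h|x y z _ h1 _ h2].
- by apply: rst_step; apply: wstep_catl.
- exact: weq_refl.
- exact: weq_sym.
- exact: weq_trans h2.
Qed.

Lemma weq_catr w u v : weq u v -> weq (u ++ w) (v ++ w).
Proof.
elim=> [x y h|x|x y _ h|x y z _ h1 _ h2].
- by apply: rst_step; apply: wstep_catr.
- exact: weq_refl.
- exact: weq_sym.
- exact: weq_trans h2.
Qed.

Lemma weq_cat u u' v v' : weq u u' -> weq v v' -> weq (u ++ v) (u' ++ v').
Proof. by move=> h1 h2; apply: weq_trans (weq_catr _ h1) (weq_catl _ h2). Qed.

Lemma rev_mid (x y : seq S) a b : rev (x ++ a :: b :: y) = rev y ++ b :: a :: rev x.
Proof. by rewrite rev_cat !rev_cons -!cats1 -!catA. Qed.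

Lemma wstep_rev u v : wstep u v -> weq (rev u) (rev v).
Proof.
case=> [x y s|x y s t h].
- by rewrite rev_mid rev_cat; apply: rst_step; constructor.
- by rewrite !rev_mid; apply: rst_step; constructor; rewrite comm_sym.
Qed.

Lemma weq_rev u v : weq u v -> weq (rev u) (rev v).
Proof.
elim=> [x y h|x|x y _ h|x y z _ h1 _ h2].
- exact: wstep_rev.
- exact: weq_refl.
- exact: weq_sym.
- exact: weq_trans h2.
Qed.

Lemma weq_cancel s : weq [:: s; s] [::].
Proof. by apply: rst_step; apply: (@wstep_cancel _ _ [::] [::]). Qed.

Lemma weq_revK u : weq (u ++ rev u) [::].
Proof.
elim: u => [|x u IH] //=; first exact: weq_refl.
rewrite rev_cons -cats1.
have -> : x :: u ++ rev u ++ [:: x] = [:: x] ++ (u ++ rev u) ++ [:: x] by rewrite catA.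
apply: weq_trans (weq_cat (weq_refl [:: x]) (weq_catr [:: x] IH)) _.
exact: weq_cancel.
Qed.

Definition P s x := (x != s) && comm x s.

Fixpoint canc s (r : seq S) : option (seq S) :=
  match r with
  | [::] => None
  | x :: r' => if x == s then Some r'
               else if comm x s then omap (cons x) (canc s r') else None
  end.

Definition ins s r := if canc s r is Some r' then r' else s :: r.
Definition red (u : seq S) := foldr ins [::] u.
Fixpoint rd (r : seq S) := if r is x :: r' then (canc x r' == None) && rd r' else true.

Lemma canc_cat s a b : canc s (a ++ b) =
  if all (P s) a then omap (cat a) (canc s b) else omap (cat^~ b) (canc s a).
Proof.
elim: a => [|x a IH] /=; first by case: (canc s b).
rewrite /P; case: eqP => [->|nxs] //=.
case: (comm x s) => //=; rewrite IH.
by case: (all _ a); case: (canc s _).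
Qed.

Lemma cancP s r r' : canc s r = Some r' <->
  exists a b, [/\ r = a ++ s :: b, r' = a ++ b & all (P s) a].
Proof.
split; last by case=> a [b [-> -> h]]; rewrite canc_cat h /= eqxx.
elim: r r' => [|x r IH] r' //=.
case: eqP => [-> [<-]|nxs]; first by exists [::], r.
case: ifP => // cx; case E: (canc s r) => [c|] //= [<-].
have [a [b [-> -> h]]] := IH _ E.
exists (x :: a), b; split=> //.
by rewrite /= /P h cx andbT andbT; apply/eqP.
Qed.

Lemma canc_size s r r' : canc s r = Some r' -> size r = (size r').+1.
Proof. by case/cancP=> a [b [-> -> _]]; rewrite !size_cat /= addnS. Qed.

Lemma canc_mem s r r' : canc s r = Some r' -> s \in r.
Proof. by case/cancP=> a [b [-> _ _]]; rewrite mem_cat inE eqxx orbT. Qed.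

Inductive cswap : seq S -> seq S -> Prop :=
  cswap_c a b s t : comm s t -> cswap (a ++ s :: t :: b) (a ++ t :: s :: b).
Definition ceq := clos_refl_sym_trans _ cswap.

Lemma ceq_refl u : ceq u u. Proof. exact: rst_refl. Qed.
Lemma ceq_sym u v : ceq u v -> ceq v u. Proof. exact: rst_sym. Qed.
Lemma ceq_trans u v w : ceq u v -> ceq v w -> ceq u w.
Proof. exact: rst_trans. Qed.

Lemma ceq_swap a b s t : comm s t -> ceq (a ++ s :: t :: b) (a ++ t :: s :: b).
Proof. by move=> h; apply: rst_step; constructor. Qed.

Lemma ceq_catl w u v : ceq u v -> ceq (w ++ u) (w ++ v).
Proof.
elim=> [x y h|x|x y _ h|x y z _ h1 _ h2].
- by case: h => a b s t h; rewrite !catA; apply: ceq_swap.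
- exact: ceq_refl.
- exact: ceq_sym.
- exact: ceq_trans h2.
Qed.

Lemma ceq_cons x u v : ceq u v -> ceq (x :: u) (x :: v).
Proof. exact: (ceq_catl [:: x]). Qed.

Lemma ceq_catr w u v : ceq u v -> ceq (u ++ w) (v ++ w).
Proof.
elim=> [x y h|x|x y _ h|x y z _ h1 _ h2].
- by case: h => a b s t h; rewrite -!catA /=; apply: ceq_swap.
- exact: ceq_refl.
- exact: ceq_sym.
- exact: ceq_trans h2.
Qed.

Lemma ceq_perm u v : ceq u v -> perm_eq u v.
Proof.
elim=> [x y h|x|x y _ h|x y z _ h1 _ h2] //.
- case: h => a b s t _; rewrite perm_cat2l.
  by rewrite -[s :: t :: b]/([:: s; t] ++ b) -[t :: s :: b]/([:: t; s] ++ b)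
    perm_cat2r (perm_catC [:: s] [:: t]).
- by rewrite perm_sym.
- exact: perm_trans h2.
Qed.

Lemma ceq_size u v : ceq u v -> size u = size v.
Proof. by move/ceq_perm/perm_size. Qed.

Lemma ceq_weq u v : ceq u v -> weq u v.
Proof.
elim=> [x y h|x|x y _ h|x y z _ h1 _ h2].
- by case: h => a b s t h; apply: rst_step; constructor.
- exact: weq_refl.
- exact: weq_sym.
- exact: weq_trans h2.
Qed.

Definition orel (o1 o2 : option (seq S)) :=
  match o1, o2 with None, None => True | Some a, Some b => ceq a b | _, _ => False end.

Lemma canc_swap0 s x y b : comm x y ->
  orel (canc s (x :: y :: b)) (canc s (y :: x :: b)).
Proof.
move=> cxy /=.
have cyx : comm y x by rewrite comm_sym.
case: (eqVneq x s) => [exs|nxs].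
  subst x; case: (eqVneq y s) => [eys|nys]; first by subst y; exact: ceq_refl.
  by rewrite cyx /=; exact: ceq_refl.
case: (eqVneq y s) => [eys|nys].
  by subst y; rewrite cxy /=; exact: ceq_refl.
case: (comm x s); case: (comm y s) => //=; case: (canc s b) => //= c.
exact: (@ceq_swap [::]).
Qed.

Lemma canc_cswap s u v : cswap u v -> orel (canc s u) (canc s v).
Proof.
case=> a b x y cxy; rewrite !canc_cat.
case: (all (P s) a).
  have := canc_swap0 s b cxy.
  by case: (canc s (x :: _)); case: (canc s (y :: _)) => //= c d h; apply: ceq_catl.
case: (canc s a) => //= c.
exact: ceq_swap.
Qed.

Lemma canc_ceq s u v : ceq u v -> orel (canc s u) (canc s v).
Proof.
elim=> [x y h|x|x y _ h|x y z _ h1 _ h2].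
- exact: canc_cswap.
- by case: (canc s x) => //= c; exact: ceq_refl.
- by move: h; case: (canc s x); case: (canc s y) => //= c d; apply: ceq_sym.
- move: h1 h2; case: (canc s x); case: (canc s y); case: (canc s z) => //= c d e.
  by move=> h1 h2; exact: (ceq_trans h1 h2).
Qed.

Lemma ins_ceq s u v : ceq u v -> ceq (ins s u) (ins s v).
Proof.
move=> h; rewrite /ins; have := canc_ceq s h.
case: (canc s u); case: (canc s v) => //= _; exact: ceq_cons.
Qed.

Lemma foldr_ins_ceq x u v : ceq u v -> ceq (foldr ins u x) (foldr ins v x).
Proof. by elim: x => [|a x IH] //= h; apply: ins_ceq; apply: IH. Qed.

Lemma canc_none_ceq s u v : ceq u v -> (canc s u == None) = (canc s v == None).
Proof. by move/(canc_ceq s); case: (canc s u); case: (canc s v). Qed.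

Lemma rd_cswap u v : cswap u v -> rd u = rd v.
Proof.
case=> a b x y cxy; elim: a => [|c a IH] /=; last first.
  by rewrite IH (canc_none_ceq c (@ceq_swap a b x y cxy)).
case: (eqVneq x y) => [->//|nxy].
rewrite eq_sym in nxy.
have cyx : comm y x by rewrite comm_sym.
rewrite cyx cxy.
by case: (canc x b); case: (canc y b).
Qed.

Lemma rd_ceq u v : ceq u v -> rd u = rd v.
Proof.
elim=> [x y h|x|x y _ h|x y z _ h1 _ h2] //.
- exact: rd_cswap.
- by rewrite h1.
Qed.

Lemma ceq_front s a b : all (P s) a -> ceq (a ++ s :: b) (s :: a ++ b).
Proof.
elim: a => [|x a IH] /=; first by move=> _; exact: ceq_refl.
case/andP=> /andP [_ cxs] h.
apply: ceq_trans (ceq_cons x (IH h)) _.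
exact: (@ceq_swap [::]).
Qed.

Lemma canc_front s r r' : canc s r = Some r' -> ceq r (s :: r').
Proof. by case/cancP=> a [b [-> -> h]]; apply: ceq_front. Qed.

Lemma rd_canc s r r' : rd r -> canc s r = Some r' -> canc s r' = None /\ rd r'.
Proof.
move=> hr /canc_front h; rewrite (rd_ceq h) /= in hr.
by case/andP: hr => /eqP.
Qed.

Lemma rd_ins s r : rd r -> rd (ins s r).
Proof.
rewrite /ins; case E: (canc s r) => [r'|] hr; first by case: (rd_canc hr E).
by rewrite /= E.
Qed.

Lemma rd_red u : rd (red u).
Proof. by elim: u => [|x u IH] //=; apply: rd_ins. Qed.

Lemma ins_ins s r : rd r -> ceq (ins s (ins s r)) r.
Proof.
rewrite /ins; case E: (canc s r) => [r'|] hr.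
  by case: (rd_canc hr E) => -> _; apply: ceq_sym; apply: canc_front.
by rewrite /= eqxx; exact: ceq_refl.
Qed.

Lemma ins_comm_aux s t r : comm s t -> s != t -> canc s r = None ->
  canc t r <> None -> ins s (ins t r) = ins t (ins s r).
Proof.
move=> cst nst Es; case Et: (canc t r) => [rt|] // _.
rewrite /ins Et Es /= (negbTE nst) cst.
move: (Et) => /cancP [a [b [Er Ert ha]]]; subst r rt.
rewrite Et.
have -> : canc s (a ++ b) = None.
  move: Es; rewrite !canc_cat /=.
  have nts : t != s by rewrite eq_sym.
  rewrite (negbTE nts) comm_sym cst.
  by case: (all (P s) a); [case: (canc s b) | case: (canc s a)].
by [].
Qed.

Lemma ins_comm s t r : comm s t -> rd r ->
  ceq (ins s (ins t r)) (ins t (ins s r)).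
Proof.
move=> cst hr; case: (eqVneq s t) => [->|nst]; first exact: ceq_refl.
have cts : comm t s by rewrite comm_sym.
have nts : t != s by rewrite eq_sym.
case Es: (canc s r) => [rs|]; case Et: (canc t r) => [rt|].
-
  rewrite /ins Es Et.
  move: (Et) => /cancP [a [b [Er Ert ha]]]; subst r rt.
  move: Es; rewrite canc_cat /= (negbTE nts) cts.
  case hs: (all (P s) a).
    case Eb: (canc s b) => [b'|] //= [<-].
    by rewrite canc_cat hs Eb /= canc_cat ha /= eqxx; exact: ceq_refl.
  case Ea: (canc s a) => [a'|] //= [<-].
  rewrite canc_cat hs Ea /= canc_cat.
  move: Ea => /cancP [a1 [a2 [Ea Ea' _]]]; subst a a'.
  have -> : all (P t) (a1 ++ a2) by move: ha; rewrite !all_cat /= => /and3P [-> _ ->].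
  by rewrite /= eqxx; exact: ceq_refl.
- rewrite (@ins_comm_aux t s r) //; first exact: ceq_refl.
  by rewrite Es.
- rewrite (@ins_comm_aux s t r) //; first exact: ceq_refl.
  by rewrite Et.
- rewrite /ins Es Et /= (negbTE nst) (negbTE nts) cst cts Es Et.
  exact: (@ceq_swap [::]).
Qed.

Lemma red_cat u v : red (u ++ v) = foldr ins (red v) u.
Proof. by rewrite /red foldr_cat. Qed.

Lemma red_wstep u v : wstep u v -> ceq (red u) (red v).
Proof.
case=> [x y s|x y s t h].
- by rewrite !red_cat /=; apply: foldr_ins_ceq; apply: ins_ins; apply: rd_red.
- by rewrite !red_cat /=; apply: foldr_ins_ceq; apply: ins_comm => //; apply: rd_red.
Qed.

Lemma red_weq u v : weq u v -> ceq (red u) (red v).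
Proof.
elim=> [x y h|x|x y _ h|x y z _ h1 _ h2].
- exact: red_wstep.
- exact: ceq_refl.
- exact: ceq_sym.
- exact: ceq_trans h2.
Qed.

Lemma weq_ins s r : weq (s :: r) (ins s r).
Proof.
rewrite /ins; case E: (canc s r) => [r'|]; last exact: weq_refl.
have h := ceq_weq (canc_front E).
apply: weq_trans (weq_cat (weq_refl [:: s]) h) _.
exact: (weq_catr r' (weq_cancel s)).
Qed.

Lemma weq_red u : weq u (red u).
Proof.
elim: u => [|x u IH] /=; first exact: weq_refl.
apply: weq_trans (weq_cat (weq_refl [:: x]) IH) _.
exact: weq_ins.
Qed.

Lemma size_ins s r : size (ins s r) = if canc s r is Some _ then (size r).-1 else (size r).+1.
Proof. by rewrite /ins; case E: (canc s r) => [r'|] //; rewrite (canc_size E). Qed.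

Lemma size_red u : size (red u) <= size u.
Proof.
elim: u => [|x u IH] //=; rewrite size_ins.
by case: (canc _ _) => [_|]; [apply: leq_trans (leq_pred _) (leqW IH)|].
Qed.

Lemma red_rd r : rd r -> red r = r.
Proof.
elim: r => [|x r IH] //= /andP [/eqP E hr].
by rewrite IH // /ins E.
Qed.

Lemma red_size_eq u : size (red u) = size u -> rd u.
Proof.
elim: u => [|x u IH] //= h.
move: h; rewrite size_ins.
have hu := size_red u.
case E: (canc x (red u)) => [r'|] h.
  by have := leq_trans (leq_pred _) hu; rewrite h ltnn.
move: h => [h]; have hru := IH h.
by rewrite hru andbT; rewrite (red_rd hru) in E; rewrite E.
Qed.


Local Notation W := (@Defs.W S comm).
Local Notation wpi := (@Defs.wpi S comm).
Local Notation wmul := (@Defs.wmul S comm).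
Local Notation winv := (@Defs.winv S comm).
Local Notation wgen := (@Defs.wgen S comm).
Local Notation wlen := (@Defs.wlen S comm).
Local Notation VG := (@Defs.VG S comm).

Lemma wpiP u v : wpi u = wpi v <-> weq u v.
Proof.
split=> [h|h].
  by move/(@eqquotP _ _ W): h => /asboolP.
by apply/(@eqquotP _ _ W); apply/asboolP.
Qed.

Lemma wpi_surj (x : W) : exists u, x = wpi u.
Proof. by exists (repr x); rewrite /Defs.wpi reprK. Qed.

Lemma wpi_repr (x : W) : wpi (repr x) = x.
Proof. by rewrite /Defs.wpi reprK. Qed.

Lemma weq_repr u : weq (repr (wpi u)) u.
Proof. by apply/wpiP; rewrite wpi_repr. Qed.

Lemma wmulE u v : wmul (wpi u) (wpi v) = wpi (u ++ v).
Proof. by apply/wpiP; apply: weq_cat; apply: weq_repr. Qed.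

Lemma winvE u : winv (wpi u) = wpi (rev u).
Proof. by apply/wpiP; apply: weq_rev => //; apply: weq_repr. Qed.

Definition e : W := wpi [::].

Lemma mulA (x y z : W) : wmul x (wmul y z) = wmul (wmul x y) z.
Proof.
case: (wpi_surj x) => a ->; case: (wpi_surj y) => b ->; case: (wpi_surj z) => c ->.
by rewrite !wmulE catA.
Qed.

Lemma mul1w (x : W) : wmul e x = x.
Proof. by case: (wpi_surj x) => a ->; rewrite wmulE. Qed.

Lemma mulw1 (x : W) : wmul x e = x.
Proof. by case: (wpi_surj x) => a ->; rewrite wmulE cats0. Qed.

Lemma mulwV (x : W) : wmul x (winv x) = e.
Proof.
case: (wpi_surj x) => a ->; rewrite winvE wmulE; apply/wpiP.
exact: weq_revK.
Qed.

Lemma mulVw (x : W) : wmul (winv x) x = e.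
Proof.
case: (wpi_surj x) => a ->; rewrite winvE wmulE; apply/wpiP.
by have := weq_revK (rev a); rewrite revK.
Qed.

Lemma invK (x : W) : winv (winv x) = x.
Proof. by case: (wpi_surj x) => a ->; rewrite !winvE revK. Qed.

Lemma invM (x y : W) : winv (wmul x y) = wmul (winv y) (winv x).
Proof.
case: (wpi_surj x) => a ->; case: (wpi_surj y) => b ->.
by rewrite wmulE !winvE wmulE rev_cat.
Qed.

Lemma inv_gen s : winv (wgen s) = wgen s.
Proof. by rewrite /Defs.wgen winvE. Qed.

Lemma gen_gen s : wmul (wgen s) (wgen s) = e.
Proof. by rewrite /Defs.wgen wmulE; apply/wpiP; apply: weq_cancel. Qed.

Lemma gen_genK s x : wmul (wgen s) (wmul (wgen s) x) = x.
Proof. by rewrite mulA gen_gen mul1w. Qed.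

Lemma mulK (x y : W) : wmul (winv x) (wmul x y) = y.
Proof. by rewrite mulA mulVw mul1w. Qed.

Lemma mulKV (x y : W) : wmul x (wmul (winv x) y) = y.
Proof. by rewrite mulA mulwV mul1w. Qed.

Lemma mul_gen_inj s x y : wmul (wgen s) x = wmul (wgen s) y -> x = y.
Proof. by move=> h; rewrite -(gen_genK s x) h gen_genK. Qed.

Lemma lenE u : wlen (wpi u) = size (red u).
Proof.
rewrite /Defs.wlen; case: ex_minnP => n /existsP [t /eqP Ht] Hmin.
apply/eqP; rewrite eqn_leq; apply/andP; split.
  apply: Hmin; apply/existsP; exists (in_tuple (red u)).
  by apply/eqP/wpiP/weq_sym; apply: weq_red.
have h : ceq (red t) (red u) by apply: red_weq => //; apply/wpiP.
by rewrite -(ceq_size h); apply: leq_trans (size_red _) _; rewrite size_tuple.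
Qed.

Lemma len_rd r : rd r -> wlen (wpi r) = size r.
Proof. by move=> h; rewrite lenE red_rd. Qed.

Lemma len_le u : wlen (wpi u) <= size u.
Proof. by rewrite lenE size_red. Qed.

Definition rep (x : W) := red (repr x).

Lemma rep_rd x : rd (rep x). Proof. exact: rd_red. Qed.
Lemma rep_pi x : wpi (rep x) = x.
Proof. by rewrite -[RHS]wpi_repr; apply/wpiP/weq_sym/weq_red. Qed.
Lemma rep_size x : size (rep x) = wlen x.
Proof. by rewrite -{2}(rep_pi x) len_rd // rep_rd. Qed.

Lemma len_mul x y : wlen (wmul x y) <= wlen x + wlen y.
Proof.
by rewrite -{1}(rep_pi x) -{1}(rep_pi y) wmulE; apply: leq_trans (len_le _) _; rewrite size_cat !rep_size.
Qed.

Lemma len_inv_le x : wlen (winv x) <= wlen x.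
Proof. by rewrite -{1}(rep_pi x) winvE; apply: leq_trans (len_le _) _; rewrite size_rev rep_size. Qed.

Lemma len_inv x : wlen (winv x) = wlen x.
Proof.
apply/eqP; rewrite eqn_leq len_inv_le /=.
by have := len_inv_le (winv x); rewrite invK.
Qed.

Lemma len0 x : wlen x = 0 -> x = e.
Proof. rewrite -rep_size => h; rewrite -(rep_pi x); move: h; by case: (rep x). Qed.

Lemma len_e : wlen e = 0.
Proof. by rewrite len_rd. Qed.

Lemma len_gen s : wlen (wgen s) = 1.
Proof. by rewrite len_rd. Qed.

Definition desc s x := wlen (wmul (wgen s) x) < wlen x.
Definition descR s x := wlen (wmul x (wgen s)) < wlen x.

Lemma len_gmul_rd s r : rd r ->
  wlen (wmul (wgen s) (wpi r)) = if canc s r then (size r).-1 else (size r).+1.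
Proof.
move=> hr; rewrite /Defs.wgen wmulE lenE /= red_rd // size_ins.
by case: (canc s r).
Qed.

Lemma desc_rd s r : rd r -> desc s (wpi r) = (canc s r != None).
Proof.
move=> hr; rewrite /desc len_gmul_rd // len_rd //.
case E: (canc s r) => [r'|] /=; last by rewrite ltnNge leqnSn.
by rewrite (canc_size E) /= ltnSn.
Qed.

Lemma lenS_desc s x : desc s x -> wlen x = (wlen (wmul (wgen s) x)).+1.
Proof.
rewrite -(rep_pi x); move: (rep x) (rep_rd x) => r hr.
rewrite desc_rd // len_gmul_rd // len_rd //.
by case E: (canc s r) => [r'|] //= _; rewrite (canc_size E).
Qed.

Lemma lenS_ndesc s x : ~~ desc s x -> wlen (wmul (wgen s) x) = (wlen x).+1.
Proof.
rewrite -(rep_pi x); move: (rep x) (rep_rd x) => r hr.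
rewrite desc_rd // len_gmul_rd // len_rd //.
by case E: (canc s r) => [r'|].
Qed.

Lemma descR_inv s x : descR s x = desc s (winv x).
Proof. by rewrite /descR /desc -len_inv invM inv_gen len_inv. Qed.

Lemma lenS_descR s x : descR s x -> wlen x = (wlen (wmul x (wgen s))).+1.
Proof.
rewrite descR_inv => /lenS_desc; rewrite len_inv => ->.
by rewrite -len_inv invM inv_gen invK.
Qed.

Lemma lenS_ndescR s x : ~~ descR s x -> wlen (wmul x (wgen s)) = (wlen x).+1.
Proof.
rewrite descR_inv => /lenS_ndesc; rewrite len_inv => <-.
by rewrite -len_inv invM inv_gen.
Qed.

Definition gc a b := wmul (wgen a) (wgen b) = wmul (wgen b) (wgen a).

Lemma comm_gc a b : comm a b -> gc a b.
Proof.
move=> h; rewrite /gc /Defs.wgen !wmulE; apply/wpiP.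
by apply: rst_step; apply: (@wstep_comm _ _ [::] [::]).
Qed.

Lemma ceq_pair a b u : ~~ comm a b -> ~~ comm b a -> ceq [:: a; b] u -> u = [:: a; b].
Proof.
move=> h1 h2 hc.
suff : forall u v, ceq u v -> (u = [:: a; b] <-> v = [:: a; b]) by move/(_ _ _ hc) => [->].
move=> u0 v0; elim=> [x y h|x|x y _ h|x y z _ h1' _ h2'].
- case: h => c d s t hst; split.
  + move=> E; case: c E => [|c0 [|c1 c]] /= E; [|by case: E|by case: E => _ _; case: c].
    by case: E => E1 E2 E3; subst; rewrite hst in h1.
  + move=> E; case: c E => [|c0 [|c1 c]] /= E; [|by case: E|by case: E => _ _; case: c].
    by case: E => E1 E2 E3; subst; rewrite hst in h2.
- by [].
- by split; apply h.
- by split=> E; [apply/h2'/h1'|apply/h1'/h2'].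
Qed.

Lemma gc_comm a b : gc a b -> a != b -> comm a b.
Proof.
move=> h nab; apply/negPn/negP => nc.
have nc' : ~~ comm b a by rewrite comm_sym.
move: h; rewrite /gc /Defs.wgen !wmulE => /wpiP /red_weq.
have rab : rd [:: a; b].
  have nba : b != a by rewrite eq_sym.
  by rewrite /= (negbTE nba); case: (comm b a).
have rba : rd [:: b; a].
  by rewrite /= (negbTE nab); case: (comm a b).
rewrite !cat1s !red_rd // => /(ceq_pair nc nc') [E _].
by rewrite E eqxx in nab.
Qed.

Lemma gen_inj a b : wgen a = wgen b -> a = b.
Proof.
rewrite /Defs.wgen => /wpiP /red_weq; rewrite !red_rd //= => /ceq_perm.
by move/perm_mem/(_ a); rewrite !inE eqxx => /esym/eqP.
Qed.


Definition gcom s x := wmul (wgen s) x = wmul x (wgen s).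

Lemma gcom_inv s x : gcom s x -> gcom s (winv x).
Proof.
rewrite /gcom => h; have := congr1 winv h; rewrite !invM inv_gen => ->.
by [].
Qed.

Lemma canc_gen s r r' : canc s r = Some r' -> wmul (wgen s) (wpi r) = wpi r'.
Proof.
move/canc_front/ceq_weq/wpiP => ->.
by rewrite -[s :: r']/([:: s] ++ r') -wmulE gen_genK.
Qed.

Lemma F4 s t x : desc s x -> desc t x -> s != t -> comm s t /\ desc t (wmul (wgen s) x).
Proof.
rewrite -(rep_pi x); move: (rep x) (rep_rd x) => r hr.
rewrite [desc s _]desc_rd // [desc t (wpi r)]desc_rd //.
case Es: (canc s r) => [rs|] // _; case Et: (canc t r) => [rt|] // _ nst.
have nts : t != s by rewrite eq_sym.
rewrite (canc_gen Es).
have [_ hrs] := rd_canc hr Es.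
rewrite desc_rd //.
move: (Et) => /cancP [a [b [Er Ert ha]]]; subst r rt.
move: Es; rewrite canc_cat /= (negbTE nts).
case hs: (all (P s) a).
  case: ifP => cts //; case Eb: (canc s b) => [b'|] //= [<-].
  by rewrite canc_cat ha /= eqxx; split=> //; rewrite comm_sym.
case Ea: (canc s a) => [a'|] //= [<-].
have sa := canc_mem Ea.
move: Ea => /cancP [a1 [a2 [Ea Ea' _]]]; subst a a'.
have : P t s by move/allP: ha; apply.
case/andP=> _ cst; split=> //.
have hh : all (P t) (a1 ++ a2) by move: ha; rewrite !all_cat /= => /and3P [-> _ ->].
by rewrite canc_cat hh /= eqxx.
Qed.

Lemma allP_gcom s a : all (P s) a -> gcom s (wpi a).
Proof.
move=> h; rewrite /gcom /Defs.wgen !wmulE; apply/wpiP.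
apply: ceq_weq; apply: ceq_sym; have := @ceq_front s a [::] h.
by rewrite cats0.
Qed.

Lemma F3w s a y : rd a -> wlen (wmul (wpi a) y) = size a + wlen y ->
  desc s (wmul (wpi a) y) -> canc s a = None -> all (P s) a /\ desc s y.
Proof.
move=> ha; rewrite -(rep_pi y); move: (rep y) (rep_rd y) => b hb.
rewrite wmulE lenE len_rd // -size_cat => /red_size_eq hab.
rewrite !desc_rd // canc_cat => Ec.
move=> hc; move: Ec; rewrite hc; case: (all (P s) a) => /=; [by case: (canc s b)|by []].
Qed.

Lemma F3 s x y : wlen (wmul x y) = wlen x + wlen y -> desc s (wmul x y) ->
  ~~ desc s x -> gcom s x /\ desc s y.
Proof.
move=> hl hd hn.
have hc : canc s (rep x) = None.
  by move: hn; rewrite -{1}(rep_pi x) desc_rd ?rep_rd // negbK => /eqP.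
have hl' : wlen (wmul (wpi (rep x)) y) = size (rep x) + wlen y by rewrite rep_pi rep_size.
have hd' : desc s (wmul (wpi (rep x)) y) by rewrite rep_pi.
have [h1 h2] := F3w (rep_rd x) hl' hd' hc.
by split=> //; rewrite -(rep_pi x); apply: allP_gcom.
Qed.

Lemma F3R t x y : wlen (wmul x y) = wlen x + wlen y -> descR t (wmul x y) ->
  ~~ descR t y -> gcom t y /\ descR t x.
Proof.
rewrite !descR_inv invM => hl hd hn.
have hl' : wlen (wmul (winv y) (winv x)) = wlen (winv y) + wlen (winv x).
  by rewrite -invM !len_inv hl addnC.
have [h1 h2] := F3 hl' hd hn; split=> //.
by have := gcom_inv h1; rewrite invK.
Qed.

Lemma F4R s t x : descR s x -> descR t x -> s != t -> comm s t /\ descR t (wmul x (wgen s)).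
Proof.
rewrite !descR_inv => h1 h2 h3; have [c d] := F4 h1 h2 h3; split=> //.
by rewrite invM inv_gen.
Qed.

Lemma rd_cat_aux a b : rd a -> rd b ->
  (forall c t a', a = c ++ t :: a' -> all (P t) a' -> canc t b = None) -> rd (a ++ b).
Proof.
elim: a => [|x a IH] //= /andP [/eqP hx ha] hb H.
rewrite IH //; last by move=> c t a' E; apply: (H (x :: c)); rewrite E.
rewrite canc_cat; case: ifP => hall; last by rewrite hx.
by rewrite (H [::] x a).
Qed.

Lemma F6 x y : (forall t, descR t x -> desc t y -> False) ->
  wlen (wmul x y) = wlen x + wlen y.
Proof.
move=> H; suff hr : rd (rep x ++ rep y).
  by rewrite -{1}(rep_pi x) -{1}(rep_pi y) wmulE (len_rd hr) size_cat !rep_size.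
apply: rd_cat_aux; rewrite ?rep_rd //.
move=> c t a' E hall; apply/eqP; apply/negPn/negP => hc.
apply: (H t); last by rewrite -(rep_pi y) desc_rd ?rep_rd.
rewrite /descR -(rep_pi x) E.
have -> : wmul (wpi (c ++ t :: a')) (wgen t) = wpi (c ++ a').
  rewrite /Defs.wgen wmulE; apply/wpiP.
  rewrite -catA /=.
  apply: weq_trans (weq_catl c (ceq_weq (ceq_sym (@ceq_front t a' [:: t] hall)))) _.
  apply: weq_catl; rewrite -[X in weq _ X]cats0; apply: weq_catl; exact: weq_cancel.
rewrite -E rep_pi -(rep_size x) E; apply: leq_ltn_trans (len_le _) _.
by rewrite !size_cat /= addnS.
Qed.

Lemma rd_pairwise (l : seq S) : uniq l ->
  (forall x y, x \in l -> y \in l -> x != y -> comm x y) -> rd l.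
Proof.
elim: l => [|x l IH] //= /andP [nxl ul] H.
rewrite IH //; last by move=> a b ha hb; apply: H; rewrite inE ?ha ?hb orbT.
have hall : all (P x) l.
  apply/allP => y hy; rewrite /P; have nyx : y != x by apply: contraNneq nxl => <-.
  by rewrite nyx H // ?inE ?eqxx ?hy ?orbT.
by rewrite -[l]cats0 canc_cat hall.
Qed.

Lemma rd_enum G : clique comm G -> rd (enum G).
Proof.
move=> hG; apply: rd_pairwise; first exact: enum_uniq.
by move=> x y; rewrite !mem_enum; apply: hG.
Qed.

Lemma len_VG G : clique comm G -> wlen (VG G) = #|G|.
Proof. by move=> hG; rewrite /Defs.VG len_rd ?rd_enum // cardE. Qed.

Lemma enum_split (G : {set S}) t : t \in G ->
  exists a b, enum G = a ++ t :: b /\ enum (G :\ t) = a ++ b.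
Proof.
move=> tG; have tE : t \in enum G by rewrite mem_enum.
set l := enum G.
exists (take (index t l) l), (drop (index t l).+1 l).
have E : l = take (index t l) l ++ t :: drop (index t l).+1 l.
  have hi : index t l < size l by rewrite index_mem.
  by rewrite -{2}[t](nth_index t tE) -drop_nth // cat_take_drop.
split=> //.
have -> : enum (G :\ t) = filter (predC1 t) l.
  rewrite /l /enum_mem -filter_predI; apply: eq_filter => x.
  by rewrite /= in_setD1.
have ul : uniq l by apply: enum_uniq.
rewrite {1}E filter_cat /= eqxx /=.
move: ul; rewrite {1}E cat_uniq /= => /and4P [_ h2 h3 h4].
rewrite !(@all_filterP _ _ _ _) //.
  apply/allP => x hx /=; apply: contraNneq h3 => E'; by rewrite E' in hx.
  apply/allP => x hx /=; apply: contraNneq h2 => E'; by rewrite E' in hx; rewrite hx.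
Qed.

Lemma VG_del G t : clique comm G -> t \in G -> VG G = wmul (wgen t) (VG (G :\ t)).
Proof.
move=> hG tG; have [a [b [E1 E2]]] := enum_split tG.
rewrite /Defs.VG E1 E2 /Defs.wgen wmulE /=; apply/wpiP; apply: ceq_weq.
apply: ceq_front; apply/allP => x hx.
have ul : uniq (enum G) := enum_uniq _.
  move: ul; rewrite E1 cat_uniq /= => /and4P [_ h2 _ _].
have nxt : x != t by apply: contraNneq h2 => E; rewrite -E hx.
rewrite /P nxt hG //; rewrite -mem_enum E1 mem_cat ?hx ?inE ?eqxx ?orbT //.
Qed.

Lemma VG0 : VG set0 = e.
Proof. by rewrite /Defs.VG enum_set0. Qed.

Lemma desc_VG G s : clique comm G -> desc s (VG G) = (s \in G).
Proof.
move=> hG; rewrite /Defs.VG desc_rd ?rd_enum //.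
case E: (canc s _) => [r|] /=.
  by have := canc_mem E; rewrite mem_enum => ->.
apply/esym/negbTE/negP => sG.
have [a [b [E1 _]]] := enum_split sG.
move: E; rewrite E1 canc_cat.
have : all (P s) a.
  apply/allP => x hx.
  have ul : uniq (enum G) := enum_uniq _.
  move: ul; rewrite E1 cat_uniq /= => /and4P [_ h2 _ _].
  have nxs : x != s by apply: contraNneq h2 => E; rewrite -E hx.
  rewrite /P nxs hG //; rewrite -mem_enum E1 mem_cat ?hx ?inE ?eqxx ?orbT //.
by move=> -> /=; rewrite eqxx.
Qed.

Lemma gcom_wpi s l : (forall t, t \in l -> gc s t) -> gcom s (wpi l).
Proof.
elim: l => [|x l IH] H; first by rewrite /gcom mul1w mulw1.
rewrite /gcom -[x :: l]/([:: x] ++ l) -wmulE -/(wgen x).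
rewrite mulA (H x (mem_head _ _)) -mulA IH ?mulA //.
by move=> t ht; apply: H; rewrite inE ht orbT.
Qed.

Lemma gcom_VG s (G : {set S}) : (forall t, t \in G -> gc s t) -> gcom s (VG G).
Proof. by move=> H; apply: gcom_wpi => t; rewrite mem_enum; apply: H. Qed.

Lemma Pu_cond n (G : {set S}) x : #|G| = n -> clique comm G ->
  (wlen (wmul (winv (VG G)) x) + wlen (VG G) == wlen x) = [forall t in G, desc t x].
Proof.
elim: n G x => [|n IH] G x hn hG.
  have -> : G = set0 by apply/eqP; rewrite -cards_eq0 hn.
  rewrite VG0 /e winvE /= mul1w len_e addn0 eqxx.
  by apply/esym/forallP => t; rewrite in_set0.
case: (set_0Vmem G) => [E|[t tG]]; first by rewrite E cards0 in hn.
have hG' : clique comm (G :\ t) by move=> a b /setD1P [_ ha] /setD1P [_ hb]; apply: hG.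
have hn' : #|G :\ t| = n by move: hn; rewrite (cardsD1 t) tG add1n => [[]].
apply/idP/idP.
  move/eqP=> hl; apply/forallP => u; apply/implyP => uG.
  have hGu : clique comm (G :\ u) by move=> a b /setD1P [_ ha] /setD1P [_ hb]; apply: hG.
  rewrite (len_VG hG) in hl.
  have hx : x = wmul (VG G) (wmul (winv (VG G)) x) by rewrite mulKV.
  set z := wmul (winv (VG G)) x in hl hx.
  rewrite /desc {1}hx (VG_del hG uG) -mulA gen_genK.
  apply: leq_ltn_trans (len_mul _ _) _.
  rewrite (len_VG hGu) -hl (cardsD1 u G) uG add1n addnS ltnS.
  by rewrite addnC.
move/forallP=> H.
have ht : desc t x by have := H t; rewrite tG.
have H' : [forall u in G :\ t, desc u (wmul (wgen t) x)].
  apply/forallP => u; apply/implyP => /setD1P [nut uG].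
  have hu : desc u x by have := H u; rewrite uG.
  have ntu : t != u by rewrite eq_sym.
  by case: (F4 ht hu ntu).
have := IH (G :\ t) (wmul (wgen t) x) hn' hG'; rewrite H' (len_VG hG') => /eqP hI.
rewrite (VG_del hG tG) invM inv_gen -mulA -(VG_del hG tG) (len_VG hG).
by rewrite (cardsD1 t G) tG add1n addnS hI -(lenS_desc ht).
Qed.


Local Notation inA := (@Defs.inA S comm).

Definition cB s w1 (G : {set S}) := gcom s w1 /\ (forall t, t \in G -> gc s t).

Lemma len_mul3 a b c : wlen (wmul a (wmul b c)) <= wlen a + wlen b + wlen c.
Proof. by apply: leq_trans (len_mul _ _) _; rewrite -addnA leq_add2l len_mul. Qed.

Lemma gc_sym a b : gc a b -> gc b a. Proof. by move=> h; rewrite /gc h. Qed.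

Lemma descR_gen t s : descR t (wgen s) -> t = s.
Proof.
rewrite /descR len_gen ltnS leqn0 => /eqP /len0 h.
apply: gen_inj; rewrite -[wgen t]mul1w -(gen_gen s) -mulA h mulw1.
by [].
Qed.

Lemma clique_add s G : clique comm G -> (forall t, t \in G -> gc s t) ->
  clique comm (s |: G).
Proof.
move=> hG hc a b; rewrite !in_setU1 => /predU1P [->|ha] /predU1P [->|hb] nab.
- by rewrite eqxx in nab.
- exact: gc_comm (hc b hb) nab.
- by rewrite comm_sym; apply: gc_comm (hc a ha) _; rewrite eq_sym.
- exact: hG.
Qed.

Lemma clique_sub (G H : {set S}) : clique comm G -> H \subset G -> clique comm H.
Proof. by move=> hG /subsetP hs a b ha hb; apply: hG; apply: hs. Qed.

Lemma inA_len w w1 G w2 : inA w w1 G w2 -> wlen w1 <= wlen w /\ wlen w2 <= wlen w.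
Proof. by case=> _ _ -> _; split; lia. Qed.

Lemma ndescR x t : ~~ descR t x -> wlen x < wlen (wmul x (wgen t)).
Proof. by move/lenS_ndescR => ->. Qed.

Lemma A1 s w0 w1 G w2 : wlen (wmul (wgen s) w0) = (wlen w0).+1 ->
  inA w0 w1 G w2 -> ~~ desc s w1.
Proof.
move=> hw [hG E hl _]; apply/negP => d.
have h1 := lenS_desc d.
have := len_mul3 (wmul (wgen s) w1) (VG G) w2.
rewrite -mulA -E hw; lia.
Qed.

Lemma A2 s w0 w1 G w2 : wlen (wmul (wgen s) w0) = (wlen w0).+1 ->
  inA w0 w1 G w2 -> cB s w1 G -> s \notin G.
Proof.
move=> hw [hG E hl _] [hc _]; apply/negP => sG.
have hGs : clique comm (G :\ s) by apply: clique_sub hG (subsetDl _ _).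
have hV := VG_del hG sG.
have e1 : wmul (wgen s) w0 = wmul w1 (wmul (VG (G :\ s)) w2).
  rewrite E hV (mulA (wgen s) w1) hc -mulA.
  by rewrite [wmul (wgen s) (wmul (wmul (wgen s) _) _)]mulA gen_genK.
have := len_mul3 w1 (VG (G :\ s)) w2.
rewrite -e1 hw (len_VG hGs); have := len_VG hG; rewrite (cardsD1 s G) sG.
lia.
Qed.

Lemma R1f s w0 w1 G w2 : wlen (wmul (wgen s) w0) = (wlen w0).+1 ->
  inA w0 w1 G w2 -> ~ cB s w1 G ->
  inA (wmul (wgen s) w0) (wmul (wgen s) w1) G w2 /\ desc s (wmul (wgen s) w1).
Proof.
move=> hw hA ncB; have nd := A1 hw hA.
case: hA => hG E hl h3.
have hs1 := lenS_ndesc nd.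
split; last by rewrite /desc gen_genK hs1.
split=> //; first by rewrite E mulA.
  by rewrite hw hl hs1; lia.
move=> t ht.
case: (boolP (descR t (wmul (wgen s) w1))) => [d|nd']; last exact: ndescR.
have nd1 : ~~ descR t w1 by rewrite /descR -leqNgt; apply: ltnW; apply: h3.
have hl2 : wlen (wmul (wgen s) w1) = wlen (wgen s) + wlen w1 by rewrite len_gen hs1.
have [hc hd] := F3R hl2 d nd1.
have ets := descR_gen hd; subst t.
by exfalso; apply: ncB; split=> //; move=> t /ht; apply: gc_sym.
Qed.

Lemma R1b s w0 v1 H v2 : wlen (wmul (wgen s) w0) = (wlen w0).+1 ->
  inA (wmul (wgen s) w0) v1 H v2 -> desc s v1 ->
  inA w0 (wmul (wgen s) v1) H v2 /\ ~ cB s (wmul (wgen s) v1) H.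
Proof.
move=> hw [hH E hl h3] d.
have h1 := lenS_desc d.
split.
  split=> //.
  - by rewrite -(gen_genK s w0) E mulA.
  - by move: hl; rewrite hw h1; lia.
  - move=> t ht; case: (boolP (descR t (wmul (wgen s) v1))) => [dR|ndR]; last exact: ndescR.
    have h2 := lenS_descR dR.
    have := h3 t ht.
    have := len_mul (wgen s) (wmul (wmul (wgen s) v1) (wgen t)).
    rewrite !mulA gen_gen mul1w len_gen; lia.
move=> [hc hcs].
have := h3 s hcs.
have e2 : wmul v1 (wgen s) = wmul (wgen s) v1 by rewrite -{1}(gen_genK s v1) hc -mulA gen_gen mulw1.
by rewrite e2; lia.
Qed.

Lemma R2f s w0 w1 G w2 : wlen (wmul (wgen s) w0) = (wlen w0).+1 ->
  inA w0 w1 G w2 -> cB s w1 G ->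
  [/\ inA (wmul (wgen s) w0) w1 (s |: G) w2, ~~ desc s w1 & s \notin G].
Proof.
move=> hw hA hcB; have nd := A1 hw hA; have nsG := A2 hw hA hcB.
case: hcB => hc hcs; case: hA => hG E hl h3.
have hG' := clique_add hG hcs.
have hV : VG (s |: G) = wmul (wgen s) (VG G).
  by rewrite (VG_del hG' (setU11 _ _)) setU1K.
split=> //; split=> //.
- by rewrite E hV (mulA (wgen s) w1) hc -!mulA.
- by rewrite hw hl (len_VG hG') (len_VG hG) cardsU1 nsG; lia.
- move=> t ht; apply: h3 => u hu; apply: ht; rewrite in_setU1 hu orbT //.
Qed.

Lemma R2b s w0 v1 H v2 : wlen (wmul (wgen s) w0) = (wlen w0).+1 ->
  inA (wmul (wgen s) w0) v1 H v2 -> ~~ desc s v1 -> s \in H ->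
  inA w0 v1 (H :\ s) v2 /\ cB s v1 (H :\ s).
Proof.
move=> hw [hH E hl h3] nd sH.
have hHs : clique comm (H :\ s) by apply: clique_sub hH (subsetDl _ _).
have hV := VG_del hH sH.
have l1 := len_mul (VG H) v2; have l2 := len_mul v1 (wmul (VG H) v2).
have hl' : wlen (wmul v1 (wmul (VG H) v2)) = wlen v1 + wlen (wmul (VG H) v2).
  by rewrite -E in l2 *; lia.
have dw : desc s (wmul v1 (wmul (VG H) v2)) by rewrite -E /desc gen_genK hw.
have [hc _] := F3 hl' dw nd.
have hcs : forall t, t \in H :\ s -> gc s t.
  move=> t /setD1P [nts tH]; apply: comm_gc; apply: hH => //; by rewrite eq_sym.
split; last by [].
split=> //.
- rewrite -(gen_genK s w0) E hV (mulA (wgen s) v1) hc -mulA.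
  by rewrite [wmul (wgen s) (wmul (wmul (wgen s) _) _)]mulA gen_genK.
- move: hl; rewrite hw (len_VG hH) (len_VG hHs) (cardsD1 s H) sH; lia.
- move=> t ht.
  case: (boolP (descR t v1)) => [dR|ndR]; last exact: ndescR.
  apply: h3 => u uH.
  case: (eqVneq u s) => [->|nus]; last by apply: ht; rewrite in_setD1 nus.
  case: (eqVneq t s) => [->//|nts].
  apply: gc_sym; apply: comm_gc.
  have hs1 := lenS_ndesc nd.
  have d1 : descR t (wmul (wgen s) v1).
    have h2 := lenS_descR dR.
    rewrite /descR hs1 -mulA.
    have := len_mul (wgen s) (wmul v1 (wgen t)); rewrite len_gen; lia.
  have d2 : descR s (wmul (wgen s) v1).
    by rewrite /descR hc -mulA gen_gen mulw1 -hc hs1.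
  have nst : s != t by rewrite eq_sym.
  have [c _] := F4R d2 d1 nst.
  by [].
Qed.

Lemma R3f s w0 w1 G w2 : wlen (wmul (wgen s) w0) = (wlen w0).+1 ->
  inA w0 w1 G w2 -> cB s w1 G ->
  [/\ inA (wmul (wgen s) w0) w1 G (wmul (wgen s) w2), ~~ desc s w1 & s \notin G].
Proof.
move=> hw hA hcB; have nd := A1 hw hA; have nsG := A2 hw hA hcB.
case: hcB => hc hcs; case: hA => hG E hl h3.
have gV := gcom_VG hcs.
have E' : wmul (wgen s) w0 = wmul w1 (wmul (VG G) (wmul (wgen s) w2)).
  by rewrite E (mulA (wgen s) w1) hc -mulA (mulA (wgen s) (VG G)) gV -mulA.
split=> //; split=> //.
have := len_mul3 w1 (VG G) (wmul (wgen s) w2); rewrite -E'.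
have := len_mul (wgen s) w2; rewrite len_gen; lia.
Qed.

Lemma R3b s w0 v1 H v2 : wlen (wmul (wgen s) w0) = (wlen w0).+1 ->
  inA (wmul (wgen s) w0) v1 H v2 -> ~~ desc s v1 -> s \notin H ->
  inA w0 v1 H (wmul (wgen s) v2) /\ cB s v1 H.
Proof.
move=> hw [hH E hl h3] nd nsH.
have l1 := len_mul (VG H) v2; have l2 := len_mul v1 (wmul (VG H) v2).
have hl' : wlen (wmul v1 (wmul (VG H) v2)) = wlen v1 + wlen (wmul (VG H) v2).
  by rewrite -E in l2 *; lia.
have dw : desc s (wmul v1 (wmul (VG H) v2)) by rewrite -E /desc gen_genK hw.
have [hc dV] := F3 hl' dw nd.
have hcn : canc s (enum H) = None.
  by have := desc_VG s hH; rewrite (negbTE nsH) /Defs.VG desc_rd ?rd_enum // => /negbFE/eqP.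
have hVv2 : wlen (wmul (VG H) v2) = wlen (VG H) + wlen v2.
  by rewrite -E in l2; lia.
have hlV : wlen (wmul (wpi (enum H)) v2) = size (enum H) + wlen v2.
  by move: hVv2; rewrite (len_VG hH) cardE /Defs.VG.
have [hall dv2] := F3w (rd_enum hH) hlV dV hcn.
have hcs : forall t, t \in H -> gc s t.
  move=> t tH; apply: comm_gc; rewrite comm_sym.
  by move/allP: hall => /(_ t); rewrite mem_enum tH => /(_ isT) /andP [].
have gV := gcom_VG hcs.
split; last by [].
split=> //.
- rewrite -(gen_genK s w0) E (mulA (wgen s) v1) hc -mulA (mulA (wgen s) (VG H)) gV.
  by rewrite -mulA.
- have := lenS_desc dv2; move: hl; rewrite hw; lia.
Qed.

Lemma shift_desc1 s (G : {set S}) x : (forall t, t \in G -> gc s t) -> s \notin G ->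
  (forall t, t \in G -> desc t x) -> forall t, t \in G -> desc t (wmul (wgen s) x).
Proof.
move=> hcs nsG H t tG; have dt := H t tG.
have nst : s != t by apply: contraNneq nsG => ->.
case: (boolP (desc s x)) => [ds|nds]; first by case: (F4 ds dt nst).
have h1 := lenS_ndesc nds; have h2 := lenS_desc dt.
rewrite /desc mulA -(hcs t tG) -mulA h1.
have := len_mul (wgen s) (wmul (wgen t) x); rewrite len_gen; lia.
Qed.

Lemma shift_desc s (G : {set S}) x : (forall t, t \in G -> gc s t) -> s \notin G ->
  [forall t in G, desc t (wmul (wgen s) x)] = [forall t in G, desc t x].
Proof.
move=> hcs nsG; apply/forallP/forallP => H t; apply/implyP => tG.
  have := @shift_desc1 s G (wmul (wgen s) x) hcs nsG.
  rewrite gen_genK; apply=> // u uG; exact: (implyP (H u) uG).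
apply: (@shift_desc1 s G x hcs nsG) => // u uG; exact: (implyP (H u) uG).
Qed.

Lemma red_prod w1 (G : {set S}) z :
  (forall s0, (forall t, t \in G -> wmul (wgen s0) (wgen t) = wmul (wgen t) (wgen s0)) ->
     wlen w1 < wlen (wmul w1 (wgen s0))) ->
  (forall t, t \in G -> desc t z) -> wlen (wmul w1 z) = wlen w1 + wlen z.
Proof.
move=> h3 hz; apply: F6 => t dR dt.
have : (wlen w1 < wlen (wmul w1 (wgen t)))%N.
  apply: h3 => u uG; case: (eqVneq t u) => [->//|ntu].
  by apply: comm_gc; case: (F4 dt (hz u uG) ntu).
by move: dR; rewrite /descR; lia.
Qed.

Lemma forall_setU1 (Q : pred S) s (G : {set S}) :
  [forall t in s |: G, Q t] = Q s && [forall t in G, Q t].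
Proof.
apply/forallP/andP => [H|[hs /forallP H] t].
  split; first by have := H s; rewrite setU11.
  apply/forallP => t; apply/implyP => ht; have := H t; rewrite in_setU1 ht orbT //.
apply/implyP; rewrite in_setU1 => /predU1P [->//|ht]; exact: (implyP (H t) ht).
Qed.

Section Sums.
Variables (R : realType) (p : R) (f : Defs.vec comm R).
Local Open Scope ring_scope.

Definition trip := (W * {set S} * W)%type.

Definition Ef (tau : trip) (y : W) : R :=
  p ^+ #|tau.1.2| * Defs.T1 tau.1.1 (Defs.Pu (VG tau.1.2) (Defs.T1 tau.2 f)) y.

Lemma Ef_eq w1 G w2 y : clique comm G -> Ef (w1, G, w2) y =
  p ^+ #|G| * (if [forall t in G, desc t (wmul (winv w1) y)]
               then f (wmul (winv w2) (wmul (winv w1) y)) else 0).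
Proof.
by move=> hG; rewrite /Ef /Defs.T1 /Defs.Pu /= (Pu_cond _ (erefl _) hG).
Qed.

Lemma P1 s w1 G w2 y : Ef (w1, G, w2) (wmul (wgen s) y) = Ef (wmul (wgen s) w1, G, w2) y.
Proof. by rewrite /Ef /Defs.T1 /= invM inv_gen -mulA. Qed.

Lemma P2 s w0 w1 G w2 y : wlen (wmul (wgen s) w0) = (wlen w0).+1 ->
  inA w0 w1 G w2 -> ~ cB s w1 G ->
  (if desc s y then p * Ef (w1, G, w2) y else 0) = 0.
Proof.
move=> hw hA ncB; case: ifP => // dy.
have nd := A1 hw hA.
case: hA => hG E hl h3.
rewrite Ef_eq //; case: ifP => [hf|]; last by rewrite !mulr0.
exfalso; apply: ncB.
set z := wmul (winv w1) y in hf.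
have hf' : forall t, t \in G -> desc t z by move=> t tG; exact: (implyP (forallP hf t) tG).
have ey : y = wmul w1 z by rewrite /z mulKV.
have hl2 := red_prod h3 hf'.
rewrite ey in dy.
have [hc hdz] := F3 hl2 dy nd.
split=> // t tG; case: (eqVneq s t) => [->//|nst].
by apply: comm_gc; case: (F4 hdz (hf' t tG) nst).
Qed.

Lemma P3 s w0 w1 G w2 y : wlen (wmul (wgen s) w0) = (wlen w0).+1 ->
  inA w0 w1 G w2 -> cB s w1 G ->
  Ef (w1, G, w2) (wmul (wgen s) y) = Ef (w1, G, wmul (wgen s) w2) y.
Proof.
move=> hw hA hcB; have nsG := A2 hw hA hcB.
case: hcB => hc hcs; case: hA => hG E hl h3.
rewrite !Ef_eq // mulA -(gcom_inv hc) -mulA shift_desc //.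
by rewrite invM inv_gen -mulA.
Qed.

Lemma P4 s w0 w1 G w2 y : wlen (wmul (wgen s) w0) = (wlen w0).+1 ->
  inA w0 w1 G w2 -> cB s w1 G ->
  (if desc s y then p * Ef (w1, G, w2) y else 0) = Ef (w1, s |: G, w2) y.
Proof.
move=> hw hA hcB; have nsG := A2 hw hA hcB; have nd := A1 hw hA.
case: hcB => hc hcs; case: hA => hG E hl h3.
have hG' := clique_add hG hcs.
rewrite !Ef_eq // cardsU1 nsG add1n exprS forall_setU1.
set z := wmul (winv w1) y.
case hf : [forall t in G, desc t z]; last by rewrite andbF !mulr0; case: ifP.
have hf' : forall t, t \in G -> desc t z by move=> t tG; exact: (implyP (forallP hf t) tG).
have ey : y = wmul w1 z by rewrite /z mulKV.
have hl2 := red_prod h3 hf'.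
have key : desc s y = desc s z.
  apply/idP/idP => d.
    by rewrite ey in d; case: (F3 hl2 d nd).
  rewrite ey /desc mulA hc -mulA.
  have := len_mul w1 (wmul (wgen s) z); have := lenS_desc d; lia.
by rewrite key andbT; case: (desc s z); rewrite ?mulrA // !mulr0.
Qed.

Lemma big_reindex (T1 T2 : eqType) (l1 : seq T1) (l2 : seq T2) (P1 : pred T1)
  (P2 : pred T2) (phi : T1 -> T2) (psi : T2 -> T1) (F : T2 -> R) :
  uniq l1 -> uniq l2 ->
  (forall x, x \in l1 -> P1 x -> [/\ phi x \in l2, P2 (phi x) & psi (phi x) = x]) ->
  (forall y, y \in l2 -> P2 y -> [/\ psi y \in l1, P1 (psi y) & phi (psi y) = y]) ->
  \sum_(x <- l1 | P1 x) F (phi x) = \sum_(y <- l2 | P2 y) F y.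
Proof.
move=> u1 u2 h1 h2.
rewrite -big_filter -[RHS]big_filter -(big_map phi xpredT F).
apply: perm_big; apply: uniq_perm.
- rewrite map_inj_in_uniq ?filter_uniq // => a b.
  rewrite !mem_filter => /andP [pa la] /andP [pb lb] Eab.
  have [_ _ ea] := h1 a la pa; have [_ _ eb] := h1 b lb pb.
  by rewrite -ea Eab eb.
- by rewrite filter_uniq.
- move=> y; apply/mapP/idP.
    case=> x; rewrite mem_filter => /andP [px lx] ->.
    by have [a b _] := h1 x lx px; rewrite mem_filter b a.
  rewrite mem_filter => /andP [py ly]; have [a b c] := h2 y ly py.
  by exists (psi y); [rewrite mem_filter b a|rewrite c].
Qed.

Definition U N : seq trip :=
  [seq (a, w2) | a <- [seq (w1, G) | w1 <- wball comm N, G <- index_enum {set S}],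
                 w2 <- wball comm N].

Lemma mem_wball N x : (x \in wball comm N) = (wlen x <= N)%N.
Proof.
rewrite /wball mem_undup; apply/flattenP/idP.
  case=> l /mapP [k]; rewrite mem_iota add0n ltnS => hk -> /mapP [t _ ->].
  by apply: leq_trans (len_le _) _; rewrite size_tuple.
move=> hx; exists [seq wpi (tval t) | t <- enum {: (wlen x).-tuple S}].
  by apply/mapP; exists (wlen x) => //; rewrite mem_iota add0n ltnS.
apply/mapP; exists (@Tuple (wlen x) S (rep x) (introT eqP (rep_size x))).
  by rewrite mem_enum.
by rewrite /= rep_pi.
Qed.

Lemma mem_U N (tau : trip) :
  (tau \in U N) = (tau.1.1 \in wball comm N) && (tau.2 \in wball comm N).
Proof.
case: tau => [[w1 G] w2] /=; apply/allpairsP/andP.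
  case=> [[a b]] /= [ha hb Eq]; case: Eq => Ea Eb; subst.
  by move/allpairsP: ha => [[c d]] /= [hc _ Eq]; case: Eq => E1 E2; subst.
case=> h1 h2; exists ((w1, G), w2) => /=; split=> //.
by apply/allpairsP; exists (w1, G) => /=; split=> //; apply: mem_index_enum.
Qed.

Lemma uniq_U N : uniq (U N).
Proof.
apply: allpairs_uniq; last by move=> [a b] [c d].
- apply: allpairs_uniq; last by move=> [a b] [c d].
  + exact: undup_uniq.
  + exact: index_enum_uniq.
- exact: undup_uniq.
Qed.

Lemma inA_U N w (tau : trip) : inA w tau.1.1 tau.1.2 tau.2 -> (wlen w <= N)%N -> tau \in U N.
Proof.
move=> hA hN; have [a b] := inA_len hA.
by rewrite mem_U !mem_wball (leq_trans a hN) (leq_trans b hN).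
Qed.

Definition Aw w := fun tau : trip => `[< inA w tau.1.1 tau.1.2 tau.2 >].
Definition cBb s := fun tau : trip => `[< cB s tau.1.1 tau.1.2 >].
Definition phi1 s (tau : trip) : trip := (wmul (wgen s) tau.1.1, tau.1.2, tau.2).
Definition phi2 s (tau : trip) : trip := (tau.1.1, s |: tau.1.2, tau.2).
Definition psi2 s (tau : trip) : trip := (tau.1.1, tau.1.2 :\ s, tau.2).
Definition phi3 s (tau : trip) : trip := (tau.1.1, tau.1.2, wmul (wgen s) tau.2).

Lemma inA_e w1 G w2 : inA e w1 G w2 <-> (w1, G, w2) = (e, set0, e).
Proof.
split.
  case=> hG E hl _; move: hl; rewrite len_e (len_VG hG) => hl.
  have h1 : wlen w1 = 0%N by lia.
  have h2 : wlen w2 = 0%N by lia.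
  have h3 : #|G| = 0%N by lia.
  by rewrite (len0 h1) (len0 h2); move/eqP: h3; rewrite cards_eq0 => /eqP ->.
case=> -> -> ->; split.
- by move=> a b; rewrite in_set0.
- by rewrite VG0 !mul1w.
- by rewrite VG0 len_e.
- by move=> s0 _; rewrite mul1w len_e len_gen.
Qed.

Lemma main_ind N u : rd u -> (size u <= N)%N -> forall y,
  foldr (fun s g => Defs.Ts p s \o g) id u f y =
  \sum_(tau <- U N | Aw (wpi u) tau) Ef tau y.
Proof.
elim: u => [|s u IH] hu hN y.
  rewrite /= -/e.
  have := @big_reindex unit trip [:: tt] (U N) xpredT (Aw e) (fun _ => (e, set0, e))
    (fun _ => tt) (fun tau => Ef tau y).
  rewrite big_seq1 => <- //.
  - rewrite Ef_eq; last by move=> a b; rewrite in_set0.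
    rewrite cards0 expr0 mul1r.
    have -> : [forall t in set0, desc t (wmul (winv e) y)].
      by apply/forallP => t; rewrite in_set0.
    by rewrite /e winvE /= -/e !mul1w.
  - exact: uniq_U.
  - move=> x _ _; split=> //; last by case: x.
    + by apply: (@inA_U N e (e, set0, e)); [apply/inA_e|rewrite len_e].
    + by apply/asboolP/inA_e.
  - by move=> [[w1 G] w2] _ /asboolP /inA_e ->.
move: hu => /= /andP [/eqP hc hu'].
have hsz : (size u <= N)%N by apply: ltnW.
set w0 := wpi u.
have ew : wpi (s :: u) = wmul (wgen s) w0 by rewrite /Defs.wgen wmulE.
have nd : ~~ desc s w0 by rewrite /w0 desc_rd // hc.
have hw := lenS_ndesc nd.
have hN' : (wlen (wmul (wgen s) w0) <= N)%N.
  by rewrite -ew len_rd //= hc eqxx.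
have hN0 : (wlen w0 <= N)%N by move: hN'; rewrite hw; lia.
rewrite /= /Defs.Ts /= !(IH hu' hsz) -/(desc s y).
have eZ : (if desc s y then p * \sum_(tau <- U N | Aw w0 tau) Ef tau y else 0) =
    \sum_(tau <- U N | Aw w0 tau) (if desc s y then p * Ef tau y else 0).
  by case: (desc s y); [rewrite big_distrr | rewrite big1].
rewrite eZ -big_split /= (bigID (cBb s)) /=.
rewrite (eq_bigr (fun tau => Ef (phi3 s tau) y + Ef (phi2 s tau) y)); last first.
  move=> [[w1 G] w2] /andP [/asboolP hA /asboolP hcB] /=.
  by rewrite (P3 _ hw hA hcB) (P4 _ hw hA hcB).
rewrite [X in _ + X](eq_bigr (fun tau => Ef (phi1 s tau) y)); last first.
  move=> [[w1 G] w2] /andP [/asboolP hA /asboolPn ncB] /=.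
  by rewrite P1 (P2 y hw hA ncB) addr0.
rewrite big_split /=.
rewrite [RHS](bigID (fun tau : trip => desc s tau.1.1)) /=.
rewrite [X in _ = _ + X](bigID (fun tau : trip => s \in tau.1.2)) /=.
have e1 : \sum_(tau <- U N | Aw w0 tau && ~~ cBb s tau) Ef (phi1 s tau) y =
    \sum_(tau <- U N | Aw (wmul (wgen s) w0) tau && desc s tau.1.1) Ef tau y.
  apply: (big_reindex (psi := phi1 s)); rewrite ?uniq_U //.
    move=> [[w1 G] w2] _ /andP [/asboolP hA /asboolPn ncB].
    have [hA' d] := R1f hw hA ncB.
    split; first exact: (@inA_U N _ (phi1 s (w1, G, w2)) hA' hN').
      by apply/andP; split=> //; apply/asboolP.
    by rewrite /phi1 /= gen_genK.
  move=> [[v1 H] v2] _ /andP [/asboolP hA d].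
  have [hA' ncB] := R1b hw hA d.
  split; first exact: (@inA_U N w0 (wmul (wgen s) v1, H, v2) hA' hN0).
    by apply/andP; split; [apply/asboolP|apply/asboolPn].
  by rewrite /phi1 /= gen_genK.
have e2 : \sum_(tau <- U N | Aw w0 tau && cBb s tau) Ef (phi2 s tau) y =
    \sum_(tau <- U N | Aw (wmul (wgen s) w0) tau && ~~ desc s tau.1.1 && (s \in tau.1.2)) Ef tau y.
  apply: (big_reindex (psi := psi2 s)); rewrite ?uniq_U //.
    move=> [[w1 G] w2] _ /andP [/asboolP hA /asboolP hcB].
    have [hA' d nsG] := R2f hw hA hcB.
    split; first exact: (@inA_U N _ (phi2 s (w1, G, w2)) hA' hN').
      by rewrite /= setU11 andbT; apply/andP; split; [apply/asboolP|].
    by rewrite /phi2 /psi2 /= setU1K.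
  move=> [[v1 H] v2] _ /andP [/andP [/asboolP hA d] sH].
  have [hA' hcB] := R2b hw hA d sH.
  split; first exact: (@inA_U N w0 (v1, H :\ s, v2) hA' hN0).
    by apply/andP; split; apply/asboolP.
  by rewrite /phi2 /psi2 /= setD1K.
have e3 : \sum_(tau <- U N | Aw w0 tau && cBb s tau) Ef (phi3 s tau) y =
    \sum_(tau <- U N | Aw (wmul (wgen s) w0) tau && ~~ desc s tau.1.1 && (s \notin tau.1.2)) Ef tau y.
  apply: (big_reindex (psi := phi3 s)); rewrite ?uniq_U //.
    move=> [[w1 G] w2] _ /andP [/asboolP hA /asboolP hcB].
    have [hA' d nsG] := R3f hw hA hcB.
    split; first exact: (@inA_U N _ (phi3 s (w1, G, w2)) hA' hN').
      by apply/andP; split; [apply/andP; split; [apply/asboolP|]|].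
    by rewrite /phi3 /= gen_genK.
  move=> [[v1 H] v2] _ /andP [/andP [/asboolP hA d] sH].
  have [hA' hcB] := R3b hw hA d sH.
  split; first exact: (@inA_U N w0 (v1, H, wmul (wgen s) v2) hA' hN0).
    by apply/andP; split; apply/asboolP.
  by rewrite /phi3 /= gen_genK.
rewrite e1 e2 e3 ew addrC; congr (_ + _); exact: addrC.
Qed.

End Sums.

End Words.

Local Open Scope ring_scope.
Unset Implicit Arguments.

Theorem lemma2p7 (S : finType) (comm : rel S) (comm_sym : symmetric comm)
    (R : realType) (q : R) (hq : 0 < q) (w : W comm) (f : vec comm R)
    (y : W comm) :
  let p := (q - 1) / Num.sqrt q in
  Tw p w f y =
  \sum_(w1 <- wball comm (wlen w)) \sum_(G : {set S})
    \sum_(w2 <- wball comm (wlen w) | `[< inA w w1 G w2 >])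
      p ^+ #|G| * T1 w1 (Pu (VG comm G) (T1 w2 f)) y.
Proof.
move=> p.
have [/eqP hpi /eqP hsz] := andP (xchooseP (redword_ex w)).
have hrd : rd comm (redword w).
  by apply: red_size_eq; rewrite -(lenE comm_sym) /redword hpi hsz.
rewrite /Tw (@main_ind S comm comm_sym R p f (wlen w) (redword w) hrd).
  rewrite /redword hpi big_mkcond /U big_allpairs big_allpairs.
  apply: eq_bigr => w1 _; apply: eq_bigr => G _; rewrite [RHS]big_mkcond.
  by apply: eq_bigr => w2 _.
by rewrite /redword hsz.
Qed.
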